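(* Let $\alpha$ be a nonzero real number. Every closed $\alpha$-stationary curve in $\mathbb H^2$ (not passing through $N$) is a circle centered at $N$.
   Context: Let $\langle x,y\rangle_\epsilon=x_1y_1+x_2y_2-x_3y_3$ be the Lorentzian inner product on $\mathbb R^3$ and $|x|_\epsilon=\sqrt{|\langle x,x\rangle_\epsilon|}$. The hyperbolic plane is $\mathbb H^2=\{(x,y,z):x^2+y^2-z^2=-1,\ z>0\}$ with the induced metric. It is parametrized by $\Psi(u,v)=(\sinh u\cos v,\sinh u\sin v,\cosh u)$, and $N=(0,0,1)$. The hyperbolic distance from $\Psi(u,v)$ to $N$ is $u$. For a regular curve $\gamma(t)=\Psi(u(t),v(t))$ with $u>0$, the energy is $$E_\alpha[\gamma]=\int_\gamma\mathsf d^\alpha\,ds=\int u^\alpha\sqrt{u'^2+\sinh^2(u)v'^2}\,dt,$$ where $\mathsf d$ is the hyperbolic distance to $N$. The curve is $\alpha$-stationary if it is a critical point of $E_\alpha$ (i.e. $(u,v)$ satisfies the Euler–Lagrange equations). Equivalently, its geodesic curvature satisfies $\kappa=\alpha\langle\mathbf n,\xi\rangle_\epsilon/\mathsf d$. Here $\mathbf n$ is the unit normal and $\xi=\Psi_u$ is the unit tangent of the geodesic ray from $N$ through the point. Throughout the paper, $\alpha\ne0$ and curves avoid $N$. *)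

(* Defs.v *)
From Stdlib Require Import Reals.
From Coquelicot Require Import Coquelicot.
Open Scope R_scope.

(* Parametrization of the hyperboloid model of H^2:
   Psi(u,v) = (sinh u cos v, sinh u sin v, cosh u). *)
Definition Psi (u v : R) : R * R * R :=
  (sinh u * cos v, sinh u * sin v, cosh u).

(* The hyperbolic distance from Psi(u,v) to N = (0,0,1) is u (for u >= 0). *)

Definition smooth (f : R -> R) : Prop := forall n t, ex_derive_n f n t.

Definition speed (u v : R -> R) (t : R) : R :=
  sqrt ((Derive u t) ^ 2 + (sinh (u t)) ^ 2 * (Derive v t) ^ 2).

(* Regular curve avoiding N: u > 0 and the velocity never vanishes. *)
Definition regular_curve (u v : R -> R) : Prop :=
  smooth u /\ smooth v /\
  (forall t, 0 < u t) /\
  (forall t, 0 < (Derive u t) ^ 2 + (sinh (u t)) ^ 2 * (Derive v t) ^ 2).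

Definition closed_curve (u v : R -> R) : Prop :=
  exists T, 0 < T /\ forall t, Psi (u (t + T)) (v (t + T)) = Psi (u t) (v t).

(* alpha-stationary: Euler-Lagrange equations of
   L(u,v,u',v') = u^alpha * sqrt(u'^2 + sinh^2(u) v'^2). *)
Definition alpha_stationary (alpha : R) (u v : R -> R) : Prop :=
  (forall t,
     is_derive (fun s => Rpower (u s) alpha * Derive u s / speed u v s) t
       (alpha * Rpower (u t) (alpha - 1) * speed u v t
        + Rpower (u t) alpha * sinh (u t) * cosh (u t) * (Derive v t) ^ 2
          / speed u v t)) /\
  (forall t,
     is_derive
       (fun s => Rpower (u s) alpha * (sinh (u s)) ^ 2 * Derive v s / speed u v s)
       t 0).

(* Main.v *)
Require Import Defs.
From Stdlib Require Import Reals Lra Psatz ZArith.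
From Coquelicot Require Import Coquelicot.
Open Scope R_scope.

Lemma sign_lemma f x l : is_derive f x l -> l <> 0 ->
  exists d, 0 < d /\ forall h, h <> 0 -> Rabs h < d -> 0 < (f (x+h) - f x) * l * h.
Proof.
  intros H Hl. apply is_derive_Reals in H.
  destruct (H (Rabs l) (Rabs_pos_lt _ Hl)) as [d Hd].
  exists (pos d). split; [apply cond_pos|].
  intros h Hh Hhd. specialize (Hd h Hh Hhd).
  set (q := (f (x + h) - f x) / h) in *.
  assert (Eq : f (x+h) - f x = q * h) by (unfold q; field; auto).
  rewrite Eq.
  assert (0 < q * l).
  { unfold Rabs in Hd; destruct (Rcase_abs (q - l)); destruct (Rcase_abs l); nra. }
  assert (0 < h*h) by (apply Rsqr_pos_lt in Hh; unfold Rsqr in Hh; lra).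
  nra.
Qed.

Lemma locmax_deriv f x l d0 : is_derive f x l -> 0 < d0 ->
  (forall h, Rabs h < d0 -> f (x+h) <= f x) -> l = 0.
Proof.
  intros H Hd0 Hm. destruct (Req_dec l 0) as [|Hl]; auto. exfalso.
  destruct (sign_lemma f x l H Hl) as [d [Hd Hs]].
  set (e := Rmin d d0 / 2).
  assert (He : 0 < e) by (unfold e, Rmin; destruct Rle_dec; lra).
  assert (He2 : e < d /\ e < d0) by (unfold e; split; [pose proof (Rmin_l d d0)|pose proof (Rmin_r d d0)]; lra).
  assert (A1 : Rabs e < d) by (rewrite Rabs_pos_eq; lra).
  assert (A2 : Rabs e < d0) by (rewrite Rabs_pos_eq; lra).
  assert (A3 : Rabs (-e) < d) by (rewrite Rabs_Ropp, Rabs_pos_eq; lra).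
  assert (A4 : Rabs (-e) < d0) by (rewrite Rabs_Ropp, Rabs_pos_eq; lra).
  destruct (Rlt_or_le 0 l) as [Hp|Hn].
  - assert (N1 : e <> 0) by (apply Rgt_not_eq; lra). specialize (Hs e N1 A1).
    specialize (Hm e A2). clearbody e. assert (0 < l*e) by nra.
    assert (0 <= (f x - f (x+e)) * (l*e)) by (apply Rmult_le_pos; lra). nra.
  - assert (N1 : -e <> 0) by (apply Rlt_not_eq; lra). specialize (Hs (-e) N1 A3).
    specialize (Hm (-e) A4).
    clearbody e. assert (0 < -l*e) by nra.
    assert (0 <= (f x - f (x+-e)) * (-l*e)) by (apply Rmult_le_pos; lra). nra.
Qed.

Lemma incr_lemma (f df : R -> R) a b : a < b ->
  (forall x, a <= x <= b -> is_derive f x (df x)) ->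
  (forall x, a <= x <= b -> 0 <= df x) ->
  (forall x, a < x <= b -> 0 < df x) -> f a < f b.
Proof.
  intros Hab Hd H0 H1.
  assert (Hc : forall x, a <= x <= b -> continuity_pt f x).
  { intros x Hx. apply continuity_pt_filterlim.
    apply (ex_derive_continuous (K:=R_AbsRing) (V:=R_NormedModule)).
    eexists; apply Hd; exact Hx. }
  set (m := (a + b) / 2).
  destruct (MVT_gen f a m df) as [c1 [Hc1 E1]].
  { intros x Hx. rewrite Rmin_left in Hx by (unfold m; lra).
    rewrite Rmax_right in Hx by (unfold m; lra). apply Hd. unfold m in *; lra. }
  { intros x Hx. rewrite Rmin_left in Hx by (unfold m; lra).
    rewrite Rmax_right in Hx by (unfold m; lra). apply Hc. unfold m in *; lra. }
  destruct (MVT_gen f m b df) as [c2 [Hc2 E2]].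
  { intros x Hx. rewrite Rmin_left in Hx by (unfold m; lra).
    rewrite Rmax_right in Hx by (unfold m; lra). apply Hd. unfold m in *; lra. }
  { intros x Hx. rewrite Rmin_left in Hx by (unfold m; lra).
    rewrite Rmax_right in Hx by (unfold m; lra). apply Hc. unfold m in *; lra. }
  rewrite Rmin_left in Hc1, Hc2 by (unfold m; lra).
  rewrite Rmax_right in Hc1, Hc2 by (unfold m; lra).
  assert (0 <= df c1) by (apply H0; unfold m in *; lra).
  assert (0 < df c2) by (apply H1; unfold m in *; lra).
  assert (0 < m - a /\ 0 < b - m) by (unfold m; lra).
  nra.
Qed.

Lemma sinh_pos x : 0 < x -> 0 < sinh x.
Proof. intros. rewrite <- sinh_0. apply sinh_lt; auto. Qed.

Lemma cosh_sinh x : cosh x * cosh x - sinh x * sinh x = 1.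
Proof. unfold cosh, sinh. rewrite exp_Ropp. field. apply Rgt_not_eq, exp_pos. Qed.

Lemma test x : is_derive (fun x => sinh x * cosh x - x) x (cosh x * cosh x + sinh x * sinh x - 1).
Proof. unfold sinh, cosh. auto_derive. auto. unfold Rminus, Rdiv. ring.
 Qed.

Lemma psi_pos x : 0 < x -> x < sinh x * cosh x.
Proof.
  intros Hx.
  assert (H := incr_lemma (fun x => sinh x * cosh x - x)
     (fun x => cosh x * cosh x + sinh x * sinh x - 1) 0 x Hx).
  cbv beta in H; rewrite sinh_0, cosh_0 in H.
  assert (E : forall y, cosh y * cosh y + sinh y * sinh y - 1 = 2 * (sinh y * sinh y))
    by (intro y; pose proof (cosh_sinh y); lra).
  cut (0 * 1 - 0 < sinh x * cosh x - x). lra.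
  apply H.
  - intros; apply test.
  - intros y _. rewrite E. nra.
  - intros y Hy. rewrite E. pose proof (sinh_pos y ltac:(lra)). nra.
Qed.

Lemma phi_incr x y : 0 < x -> x < y -> x * cosh x * sinh y < y * cosh y * sinh x.
Proof.
  intros Hx Hxy.
  assert (H := incr_lemma (fun x => x * cosh x / sinh x)
     (fun x => (sinh x * cosh x - x) / (sinh x * sinh x)) x y Hxy).
  pose proof (sinh_pos x Hx). pose proof (sinh_pos y ltac:(lra)).
  assert (x * cosh x / sinh x < y * cosh y / sinh y).
  { apply H.
    - intros z Hz. pose proof (sinh_pos z ltac:(lra)) as Sz.
      unfold sinh in Sz. unfold sinh, cosh. auto_derive.
      + lra.
      + rewrite !exp_Ropp in *.
        assert (Ez: 0 < exp z) by apply exp_pos.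
        assert (Q: exp z * exp z - 1 = exp z * (exp z - / exp z)) by (field; lra).
        assert (0 < exp z * exp z - 1) by (rewrite Q; nra).
        field. repeat split; apply Rgt_not_eq; lra.
    - intros z Hz. pose proof (sinh_pos z ltac:(lra)) as Sz. pose proof (psi_pos z ltac:(lra)).
      cbv beta; left; apply Rdiv_lt_0_compat; nra.
    - intros z Hz. pose proof (sinh_pos z ltac:(lra)) as Sz. pose proof (psi_pos z ltac:(lra)).
      cbv beta; apply Rdiv_lt_0_compat; nra. }
  apply (Rmult_lt_compat_r (sinh x * sinh y)) in H2; [|nra].
  replace (x * cosh x / sinh x * (sinh x * sinh y)) with (x * cosh x * sinh y) in H2 by (field; lra).
  replace (y * cosh y / sinh y * (sinh x * sinh y)) with (y * cosh y * sinh x) in H2 by (field; lra).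
  exact H2.
Qed.

Lemma cosh_inj x y : 0 < x -> 0 < y -> cosh x = cosh y -> x = y.
Proof.
  intros Hx Hy E.
  assert (Gen : forall a b, 0 < a -> a < b -> cosh a < cosh b).
  { intros a b Ha Hab. unfold cosh. rewrite !exp_Ropp.
    assert (1 < exp a) by (rewrite <- exp_0; apply exp_increasing; lra).
    assert (exp a < exp b) by (apply exp_increasing; lra).
    assert (Q : (exp b + / exp b) / 2 - (exp a + / exp a) / 2
               = (exp b - exp a) * (exp a * exp b - 1) / (2 * exp a * exp b))
      by (field; split; lra).
    assert (0 < (exp b - exp a) * (exp a * exp b - 1) / (2 * exp a * exp b)).
    { assert (1 < exp a * exp b) by nra.
      apply Rdiv_lt_0_compat; [apply Rmult_lt_0_compat|]; nra. }
    lra. }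
  destruct (Rtotal_order x y) as [H|[H|H]]; auto.
  - specialize (Gen x y Hx H). lra.
  - specialize (Gen y x Hy H). lra.
Qed.

Lemma Rpower_split x a : 0 < x -> Rpower x a = x * Rpower x (a - 1).
Proof.
  intros Hx. replace a with ((a - 1) + 1) at 1 by ring.
  rewrite Rpower_plus, Rpower_1 by auto. ring.
Qed.

Lemma Rpower_pos x a : 0 < Rpower x a.
Proof. unfold Rpower. apply exp_pos. Qed.

Theorem theorem2p7 (alpha : R) (u v : R -> R) :
  alpha <> 0 ->
  regular_curve u v ->
  closed_curve u v ->
  alpha_stationary alpha u v ->
  exists r, 0 < r /\ forall t, u t = r.
Proof.
  intros Ha [Hsu [Hsv [Hpos Hreg]]] [T [HT Hper0]] [EL1 EL2].
  assert (Hper : forall t, u (t + T) = u t).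
  { intro t. specialize (Hper0 t). apply (f_equal snd) in Hper0. simpl in Hper0.
    apply cosh_inj; auto. }
  assert (Hd : forall t, is_derive u t (Derive u t))
    by (intro t; apply Derive_correct; exact (Hsu 1%nat t)).
  assert (Hc : forall t, continuity_pt u t).
  { intro t. apply continuity_pt_filterlim.
    apply (ex_derive_continuous (K:=R_AbsRing) (V:=R_NormedModule)).
    eexists; apply Hd. }
  destruct (continuity_ab_maj u 0 T) as [t1 [Hmax Ht1]]; [lra|auto|].
  destruct (continuity_ab_min u 0 T) as [t0 [Hmin Ht0]]; [lra|auto|].
  set (P := fun t => u t0 <= u t <= u t1).
  assert (Hbase : forall t, 0 <= t <= T -> P t).
  { intros t Ht. split; [apply Hmin|apply Hmax]; auto. }
  assert (Hbig : forall t, -T <= t <= 2*T -> P t).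
  { intros t Ht. destruct (Rle_lt_dec 0 t); [destruct (Rle_lt_dec t T)|].
    - apply Hbase; lra.
    - unfold P. replace (u t) with (u (t - T)) by (rewrite <- (Hper (t - T)); f_equal; ring).
      apply Hbase; lra.
    - unfold P. rewrite <- (Hper t). apply Hbase; lra. }
  assert (Wpos : forall t, 0 < speed u v t) by (intro t; apply sqrt_lt_R0; apply Hreg).
  set (a := fun s => Rpower (u s) alpha * Derive u s / speed u v s).
  assert (Sgn : forall t, (0 < a t -> 0 < Derive u t) /\ (a t < 0 -> Derive u t < 0)).
  { intro t. pose proof (Wpos t). pose proof (Rpower_pos (u t) alpha).
    assert (E : Derive u t = a t * (speed u v t / Rpower (u t) alpha))
      by (unfold a; field; split; apply Rgt_not_eq; auto).
    assert (0 < speed u v t / Rpower (u t) alpha) by (apply Rdiv_lt_0_compat; auto).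
    rewrite E. clearbody a. split; intro; nra. }
  assert (Lform : forall t, Derive u t = 0 ->
    (alpha * Rpower (u t) (alpha - 1) * speed u v t
        + Rpower (u t) alpha * sinh (u t) * cosh (u t) * (Derive v t) ^ 2
          / speed u v t) * speed u v t
    = Rpower (u t) (alpha-1) * (Derive v t)^2 * sinh (u t) * (alpha * sinh (u t) + u t * cosh (u t))
    /\ 0 < Rpower (u t) (alpha-1) * (Derive v t)^2 * sinh (u t)).
  { intros t H0. pose proof (Wpos t) as Wt. pose proof (Hreg t) as Rt.
    assert (WW : speed u v t * speed u v t = sinh (u t) ^ 2 * Derive v t ^ 2).
    { unfold speed. rewrite sqrt_sqrt by lra. rewrite H0. ring. }
    rewrite H0 in Rt.
    pose proof (sinh_pos (u t) (Hpos t)) as St.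
    pose proof (Rpower_pos (u t) (alpha - 1)) as Pt.
    assert (0 < Derive v t ^ 2) by nra.
    split.
    - rewrite (Rpower_split (u t) alpha (Hpos t)).
      transitivity (alpha * Rpower (u t) (alpha - 1) * (speed u v t * speed u v t)
         + u t * Rpower (u t) (alpha - 1) * sinh (u t) * cosh (u t) * Derive v t ^ 2).
      + field. lra.
      + rewrite WW. ring.
    - apply Rmult_lt_0_compat; [apply Rmult_lt_0_compat|]; auto. }
  assert (D1 : Derive u t1 = 0).
  { apply (locmax_deriv u t1 _ T (Hd t1) HT). intros h Hh. apply Rabs_def2 in Hh.
    destruct (Hbig (t1+h)); [lra|]. lra. }
  assert (K1 : alpha * sinh (u t1) + u t1 * cosh (u t1) <= 0).
  { destruct (Rle_lt_dec (alpha * sinh (u t1) + u t1 * cosh (u t1)) 0) as [|Hk]; auto.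
    exfalso. destruct (Lform t1 D1) as [LE LP].
    pose proof (EL1 t1) as ED. fold a in ED.
    set (L := alpha * Rpower (u t1) (alpha - 1) * speed u v t1
        + Rpower (u t1) alpha * sinh (u t1) * cosh (u t1) * (Derive v t1) ^ 2
          / speed u v t1) in *.
    pose proof (Wpos t1).
    assert (LP2 : 0 < L) by (clearbody L; nra).
    assert (a0 : a t1 = 0) by (unfold a; rewrite D1; unfold Rdiv; ring).
    destruct (sign_lemma a t1 L ED ltac:(lra)) as [d [Hdp Hs]].
    set (e := Rmin d T / 2).
    assert (He : 0 < e /\ e < d /\ e < T).
    { unfold e. pose proof (Rmin_l d T). pose proof (Rmin_r d T).
      unfold Rmin in *; destruct Rle_dec; lra. }
    assert (Hafter : forall x, t1 < x <= t1 + e -> 0 < Derive u x).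
    { intros x Hx. apply Sgn. specialize (Hs (x - t1)).
      replace (t1 + (x - t1)) with x in Hs by ring.
      assert (HH : 0 < (a x - a t1) * L * (x - t1)).
      { apply Hs. apply Rgt_not_eq; lra. rewrite Rabs_pos_eq; lra. }
      rewrite a0 in HH. assert (HL : 0 < L*(x-t1)) by (apply Rmult_lt_0_compat; lra).
      replace ((a x - 0) * L * (x - t1)) with (a x * (L*(x-t1))) in HH by ring.
      apply (Rmult_lt_reg_r (L*(x-t1))); [exact HL|]. rewrite Rmult_0_l; exact HH. }
    assert (u t1 < u (t1 + e)).
    { apply (incr_lemma u (Derive u)); [lra| intros; apply Hd | |].
      - intros x Hx. destruct (Req_dec x t1) as [->|]. lra.
        left; apply Hafter; lra.
      - intros x Hx. apply Hafter; lra. }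
    destruct (Hbig (t1 + e)); lra. }
  assert (Hdo : forall t, is_derive (fun s => - u s) t (- Derive u t)).
  { intro t. apply (is_derive_opp u t (Derive u t)). apply Hd. }
  assert (D0 : Derive u t0 = 0).
  { cut (- Derive u t0 = 0). lra.
    apply (locmax_deriv (fun s => - u s) t0 _ T (Hdo t0) HT). intros h Hh. apply Rabs_def2 in Hh.
    destruct (Hbig (t0+h)); [lra|]. lra. }
  assert (K0 : 0 <= alpha * sinh (u t0) + u t0 * cosh (u t0)).
  { destruct (Rle_lt_dec 0 (alpha * sinh (u t0) + u t0 * cosh (u t0))) as [|Hk]; auto.
    exfalso. destruct (Lform t0 D0) as [LE LP].
    pose proof (EL1 t0) as ED. fold a in ED.
    set (L := alpha * Rpower (u t0) (alpha - 1) * speed u v t0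
        + Rpower (u t0) alpha * sinh (u t0) * cosh (u t0) * (Derive v t0) ^ 2
          / speed u v t0) in *.
    pose proof (Wpos t0).
    assert (LP2 : L < 0) by (clearbody L; nra).
    assert (a0 : a t0 = 0) by (unfold a; rewrite D0; unfold Rdiv; ring).
    destruct (sign_lemma a t0 L ED ltac:(lra)) as [d [Hdp Hs]].
    set (e := Rmin d T / 2).
    assert (He : 0 < e /\ e < d /\ e < T).
    { unfold e. pose proof (Rmin_l d T). pose proof (Rmin_r d T).
      unfold Rmin in *; destruct Rle_dec; lra. }
    assert (Hafter : forall x, t0 < x <= t0 + e -> 0 < - Derive u x).
    { intros x Hx. cut (Derive u x < 0). lra. apply Sgn. specialize (Hs (x - t0)).
      replace (t0 + (x - t0)) with x in Hs by ring.
      assert (HH : 0 < (a x - a t0) * L * (x - t0)).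
      { apply Hs. apply Rgt_not_eq; lra. rewrite Rabs_pos_eq; lra. }
      rewrite a0 in HH. assert (HL : 0 < -L*(x-t0)) by (apply Rmult_lt_0_compat; lra).
      replace ((a x - 0) * L * (x - t0)) with (- a x * (-L*(x-t0))) in HH by ring.
      cut (0 < - a x). lra.
      apply (Rmult_lt_reg_r (-L*(x-t0))); [exact HL|]. rewrite Rmult_0_l; exact HH. }
    assert (- u t0 < - u (t0 + e)).
    { apply (incr_lemma (fun s => - u s) (fun s => - Derive u s)); [lra| intros; apply Hdo | |].
      - intros x Hx. destruct (Req_dec x t0) as [->|]. lra.
        left; apply Hafter; lra.
      - intros x Hx. apply Hafter; lra. }
    destruct (Hbig (t0 + e)); lra. }
  assert (Eq01 : u t0 = u t1).
  { assert (u t0 <= u t1) by (apply Hmin; auto).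
    destruct (Req_dec (u t0) (u t1)) as [|Hne]; auto. exfalso.
    pose proof (phi_incr (u t0) (u t1) (Hpos t0) ltac:(lra)).
    pose proof (sinh_pos (u t0) (Hpos t0)). pose proof (sinh_pos (u t1) (Hpos t1)).
    assert (0 <= (alpha * sinh (u t0) + u t0 * cosh (u t0)) * sinh (u t1))
      by (apply Rmult_le_pos; lra).
    assert ((alpha * sinh (u t1) + u t1 * cosh (u t1)) * sinh (u t0) <= 0).
    { apply Rmult_le_0_r; lra. }
    nra. }
  assert (Pos : forall n : nat, forall t, 0 <= t <= INR n * T -> P t).
  { induction n as [|n IH]; intros t Ht.
    - simpl in Ht. apply Hbase; lra.
    - rewrite S_INR in Ht. destruct (Rle_lt_dec t T). apply Hbase; lra.
      unfold P. replace (u t) with (u (t - T)) by (rewrite <- (Hper (t - T)); f_equal; ring).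
      apply IH; lra. }
  assert (Neg : forall n : nat, forall t, - (INR n * T) <= t <= 0 -> P t).
  { induction n as [|n IH]; intros t Ht.
    - simpl in Ht. apply Hbase; lra.
    - rewrite S_INR in Ht. unfold P. rewrite <- (Hper t).
      destruct (Rle_lt_dec (-T) t). apply Hbase; lra.
      apply IH; lra. }
  exists (u t1). split; [apply Hpos|]. intro t.
  destruct (archimed (Rabs t / T)) as [Hup _].
  assert (Hz : (0 < up (Rabs t / T))%Z).
  { apply lt_0_IZR. assert (0 <= Rabs t / T) by (apply Rdiv_le_0_compat; [apply Rabs_pos|lra]). lra. }
  assert (En : INR (Z.to_nat (up (Rabs t / T))) = IZR (up (Rabs t / T))).
  { rewrite INR_IZR_INZ, Z2Nat.id; auto. lia. }
  set (n := Z.to_nat (up (Rabs t / T))) in *.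
  assert (Rabs t < INR n * T).
  { rewrite En. apply (Rmult_lt_compat_r T) in Hup; auto.
    replace (Rabs t / T * T) with (Rabs t) in Hup by (field; lra). lra. }
  assert (Pt : P t).
  { destruct (Rle_lt_dec 0 t).
    - apply (Pos n). rewrite Rabs_pos_eq in H by lra. lra.
    - apply (Neg n). rewrite Rabs_left in H by lra. lra. }
  unfold P in Pt. lra.
Qed.
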